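(* Let $x\in\mathbb{R}$ and let $f:\mathbb{R}\to\mathbb{R}$ be analytic and nonzero on the closed interval between $0$ and $x$, with $f(0)=1$, and suppose $f(y)=\exp\big(\sum_{i=1}^{\infty}c_i y^i\big)$ for all $y$ in that interval, the series converging there. For each positive integer $i$ put $f_i(y)=\exp(c_i y^i)$. Then for every positive integer $k$, \[ f_k(x)=\lim_{r\downarrow 1}\prod_{n=1}^{\infty}\left[ f\!\left(\frac{(r^k-1)^{1/k}x}{r^n}\right)\Big/\prod_{i<k} f_i\!\left(\frac{(r^k-1)^{1/k}x}{r^n}\right)\right]. \]
   Context: The coefficients $c_i$ are the Taylor coefficients at $0$ of $\log f$, so that $f=\prod_{i\ge1}f_i$; $f_i$ is called the $i$-th component of $f$. The product over $i<k$ runs over positive integers $i<k$. *)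

(* Defs.v *)
From HB Require Import structures.
From mathcomp Require Import all_boot all_order all_algebra.
From mathcomp Require Import all_classical all_reals all_analysis.
Set Implicit Arguments. Unset Strict Implicit. Unset Printing Implicit Defensive.
Import Order.TTheory GRing.Theory Num.Theory.
Import numFieldNormedType.Exports.
Local Open Scope ring_scope.
Local Open Scope classical_set_scope.

Definition between0 {R : realType} (x y : R) : Prop :=
  Num.min 0 x <= y <= Num.max 0 x.

Definition analytic_at {R : realType} (f : R -> R) (a : R) : Prop :=
  exists (b : nat -> R) (d : R), 0 < d /\
    forall y, `|y - a| < d ->
      (fun N => \sum_(i < N) b i * (y - a) ^+ i) @ \oo --> f y.

Definition logser {R : realType} (c : nat -> R) (y : R) (N : nat) : R :=
  \sum_(1 <= i < N) c i * y ^+ i.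

Definition fcomp {R : realType} (c : nat -> R) (i : nat) (y : R) : R :=
  expR (c i * y ^+ i).

Definition factor {R : realType} (f : R -> R) (c : nat -> R) (k : nat)
    (x r : R) (n : nat) : R :=
  let t := powR (r ^+ k - 1) (k%:R)^-1 * x / r ^+ n in
  f t / \prod_(1 <= i < k) fcomp c i t.

Definition partprod {R : realType} (f : R -> R) (c : nat -> R) (k : nat)
    (x r : R) (N : nat) : R :=
  \prod_(1 <= n < N) factor f c k x r n.

(* Main.v *)
From Pilot Require Import Defs.
From HB Require Import structures.
From mathcomp Require Import all_boot all_order all_algebra.
From mathcomp Require Import all_classical all_reals all_analysis.
From mathcomp Require Import ring lra.
Import Order.TTheory GRing.Theory Num.Theory.
Import numFieldNormedType.Exports.
Local Open Scope ring_scope.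
Local Open Scope classical_set_scope.
Lemma geom_closed (R : realType) (p : R) (K m : nat) :
  (1 - p) * \sum_(K <= n < K + m) p ^+ n = p ^+ K - p ^+ (K + m).
Proof.
elim: m => [|m IH]; first by rewrite addn0 big_geq // mulr0 subrr.
rewrite addnS big_nat_recr /= ?leq_addr // mulrDr IH exprS.
set t := p ^+ (K + m); ring.
Qed.

Lemma geom_le (R : realType) (q : R) (N : nat) : 0 <= q < 1 ->
  \sum_(1 <= n < N) q ^+ n <= q / (1 - q).
Proof.
move=> /andP[q0 q1]; case: N => [|N].
  by rewrite big_geq // divr_ge0 // subr_ge0 ltW.
have := @geom_closed R q 1 N; rewrite add1n => E.
rewrite ler_pdivlMr ?subr_gt0 // mulrC E expr1 lerBlDr lerDl exprn_ge0 //.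
Qed.

Lemma sum_geom_bound (R : realType) (a M : R) (b : nat -> R) (K N : nat) :
  0 <= a <= 1/2 -> 0 <= M -> (forall i, (K <= i)%N -> `|b i| <= M) ->
  `|\sum_(K <= i < N) b i * a ^+ i| <= 2 * M * a ^+ K.
Proof.
move=> /andP[a0 a2] M0 Hb.
have aK : 0 <= a ^+ K by rewrite exprn_ge0.
case: (leqP K N) => KN; last first.
  by rewrite big_geq ?(ltnW KN) // normr0 !mulr_ge0.
apply: (le_trans (ler_norm_sum _ _ _)).
apply: (@le_trans _ _ (\sum_(K <= i < N) M * a ^+ i)).
  apply: ler_sum_nat => i /andP[Ki _].
  rewrite normrM (ger0_norm (exprn_ge0 _ a0)).
  by rewrite ler_wpM2r ?exprn_ge0 // Hb.
rewrite -mulr_sumr (mulrC 2 M) -mulrA; apply: ler_wpM2l => //.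
rewrite -(subnKC KN).
set S := \sum_(K <= i < K + (N - K)) a ^+ i.
have S0 : 0 <= S by rewrite sumr_ge0 // => i _; rewrite exprn_ge0.
have E := @geom_closed R a K (N - K); rewrite -/S in E.
have aN : 0 <= a ^+ (K + (N - K)) by rewrite exprn_ge0.
nra.
Qed.
Lemma between0_scale (R : realType) (x a : R) : 0 <= a <= 1 -> between0 x (a * x).
Proof.
move=> /andP[a0 a1]; rewrite /between0 ge_min le_max.
have [x0|x0] := leP 0 x.
- by apply/andP; split; apply/orP; [left|right]; nra.
- by apply/andP; split; apply/orP; [right|left]; nra.
Qed.

Lemma s_pow (R : realType) (k : nat) (r : R) : (0 < k)%N -> 1 <= r ->
  powR (r ^+ k - 1) (k%:R)^-1 ^+ k = r ^+ k - 1.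
Proof.
move=> k0 r1; have h0 : 0 <= r ^+ k - 1 by rewrite subr_ge0 exprn_ege1.
rewrite -powR_mulrn ?powR_ge0 // -powRrM mulVf ?pnatr_eq0 -?lt0n // powRr1 //.
Qed.

Lemma s_small (R : realType) (k : nat) (eta : R) : (0 < k)%N -> 0 < eta ->
  exists2 e : R, 0 < e & forall r, 1 < r < 1 + e -> powR (r ^+ k - 1) (k%:R)^-1 < eta.
Proof.
move=> k0 eta0.
have := @exprn_continuous R k 1.
move=> /cvgrPdist_lt /(_ (eta ^+ k)) /(_ (exprn_gt0 _ eta0)).
move=> /nbhs_ballP [e /= e0 He]; exists e => // r /andP[r1 r2].
have : ball (1:R) e r by rewrite -ball_normE /ball_ /= ler0_norm ?subr_le0 ?ltW //; lra.
move=> /He /=; rewrite expr1n ler0_norm ?subr_le0 ?exprn_ege1 ?ltW // opprB.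
move=> H; have E := @s_pow R k r k0 (ltW r1); rewrite -E in H.
rewrite ltNge; apply/negP => Hle.
have := lerXn2r k (ltW eta0) (powR_ge0 _ _) Hle.
move=> HH; lra.
Qed.
Lemma tail_bound (R : realType) (x : R) (c : nat -> R) (k : nat) (M a : R) :
  (0 < k)%N -> 0 <= a <= 1/2 -> 0 <= M ->
  (forall i, (0 < i)%N -> `|c i * x ^+ i| <= M) ->
  cvgn (logser c (a * x)) ->
  `| limn (logser c (a * x)) - \sum_(1 <= i < k) c i * (a * x) ^+ i
      - c k * x ^+ k * a ^+ k | <= 2 * M * a ^+ k.+1.
Proof.
move=> k0 ha M0 HM cv.
set Q := \sum_(1 <= i < k.+1) c i * (a * x) ^+ i.
have EQ : \sum_(1 <= i < k) c i * (a * x) ^+ i + c k * x ^+ k * a ^+ k = Q.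
  by rewrite /Q big_nat_recr //= exprMn; congr (_ + _); ring.
rewrite -addrA -opprD EQ.
have cv2 : (fun N => logser c (a * x) N - Q) @ \oo --> limn (logser c (a * x)) - Q.
  by apply: cvgB => //; exact: cvg_cst.
apply: (cvgr_to_le (cvg_norm cv2)).
near=> N.
have kN : (k.+1 <= N)%N by near: N; exact: nbhs_infty_ge.
rewrite /logser (@big_cat_nat _ _ _ k.+1) //= -/Q addrAC subrr add0r.
rewrite (eq_bigr (fun i => (c i * x ^+ i) * a ^+ i)); last first.
  by move=> i _; rewrite exprMn; ring.
apply: sum_geom_bound => // i ki; apply: HM; exact: leq_ltn_trans ki.
Unshelve. all: by end_near.
Qed.
Lemma psum_nd (R : realType) (v : nat -> R) :
  (forall n, 0 <= v n) -> nondecreasing_seq (fun N => \sum_(1 <= n < N) v n).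
Proof.
move=> v0; apply/nondecreasing_seqP => n.
case: n => [|n] /=; first by rewrite !big_geq.
by rewrite [X in _ <= X]big_nat_recr //= lerDl.
Qed.

Lemma abs_series (R : realType) (u : nat -> R) (B : R) :
  (forall N, \sum_(1 <= n < N) `|u n| <= B) ->
  exists H, (fun N => \sum_(1 <= n < N) u n) @ \oo --> H /\ `|H| <= B.
Proof.
move=> HB.
set T := fun N => \sum_(1 <= n < N) `|u n|.
set U := fun N => \sum_(1 <= n < N) (u n + `|u n|).
have cT : cvgn T.
  apply: nondecreasing_is_cvgn; first by apply: psum_nd => n.
  by exists B => _ [N _ <-]; exact: HB.
have cU : cvgn U.
  apply: nondecreasing_is_cvgn.
    apply: psum_nd => n; have h := ler_norm (- u n); rewrite normrN in h; lra.
  exists (2 * B) => _ [N _ <-]; rewrite /U big_split /=.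
  have := HB N; have := ler_norm_sum (index_iota 1 N) u xpredT.
  move: (\sum_(1 <= n < N) u n) (\sum_(1 <= n < N) `|u n|) => a b.
  move=> /(le_trans (ler_norm a)); lra.
have cS : (fun N => \sum_(1 <= n < N) u n) @ \oo --> limn U - limn T.
  apply: (cvg_trans _ (cvgB cU cT)); apply: near_eq_cvg; near=> N.
  by rewrite /U /T /= !fctE big_split /= addrK.
exists (limn U - limn T); split => //.
apply: (cvgr_to_le (cvg_norm cS)); near=> N.
exact: le_trans (ler_norm_sum _ _ _) (HB N).
Unshelve. all: by end_near.
Qed.
Lemma geom_cvg (R : realType) (q : R) : 0 <= q < 1 ->
  (fun N => \sum_(1 <= n < N) q ^+ n) @ \oo --> q / (1 - q).
Proof.
move=> /andP[q0 q1].
have H : (fun N => (q - q * q ^+ N) / (1 - q)) @ \oo --> (q - q * 0) / (1 - q).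
  apply: cvgM; last exact: cvg_cst.
  apply: cvgB; first exact: cvg_cst.
  apply: cvgM; first exact: cvg_cst.
  by apply: cvg_expr; rewrite ger0_norm.
rewrite mulr0 subr0 in H.
rewrite -cvg_shiftS; apply: (cvg_trans _ H); apply: near_eq_cvg; near=> N => /=.
have := @geom_closed R q 1 N; rewrite add1n expr1 => E.
have q1' : 1 - q != 0 by rewrite subr_eq0 eq_sym lt_eqF.
rewrite -exprS -E; field.
Unshelve. all: by end_near.
Qed.
Lemma main_r (R : realType) (x : R) (f : R -> R) (c : nat -> R) (k : nat) (M r : R) :
  (0 < k)%N ->
  (forall y, between0 x y -> cvgn (logser c y)) ->
  (forall y, between0 x y -> f y = expR (limn (logser c y))) ->
  0 <= M -> (forall i, (0 < i)%N -> `|c i * x ^+ i| <= M) ->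
  1 < r -> powR (r ^+ k - 1) (k%:R)^-1 <= 1/2 ->
  exists H, partprod f c k x r @ \oo --> expR (c k * x ^+ k + H) /\
            `|H| <= 2 * M * powR (r ^+ k - 1) (k%:R)^-1.
Proof.
move=> k0 ser_cvg f_exp M0 HM r1 shalf.
set s := powR (r ^+ k - 1) (k%:R)^-1 in shalf *.
have s0 : 0 <= s by rewrite powR_ge0.
have sk : s ^+ k = r ^+ k - 1 by rewrite /s s_pow // ltW.
have rn1 n : 1 <= r ^+ n by rewrite exprn_ege1 // ltW.
have rn0 n : 0 < r ^+ n by apply: (lt_le_trans ltr01).
set a := fun n => s / r ^+ n.
have a0 n : 0 <= a n by rewrite divr_ge0 // ltW.
have as_ n : a n <= s by rewrite ler_pdivrMr // ler_peMr.
have ah n : 0 <= a n <= 1/2 by rewrite a0 (le_trans (as_ n)).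
have a1 n : 0 <= a n <= 1 by rewrite a0 (le_trans (as_ n)) // (le_trans shalf) //; lra.
set C := c k * x ^+ k.
set g := fun n => limn (logser c (a n * x)) - \sum_(1 <= i < k) c i * (a n * x) ^+ i.
set hn := fun n => g n - C * a n ^+ k.
have hnb n : `|hn n| <= 2 * M * a n ^+ k.+1.
  by apply: tail_bound => //; apply: ser_cvg; apply: between0_scale.
set q := (r ^+ k)^-1.
have rk1 : 1 < r ^+ k by rewrite exprn_egt1 // -lt0n.
have q01 : 0 <= q < 1.
  by rewrite invr_ge0 (ltW (lt_trans ltr01 rk1)) /= invf_lt1 // (lt_trans ltr01 rk1).
have Hone : (r ^+ k - 1) * (q / (1 - q)) = 1.
  have rk0 : r ^+ k != 0 by rewrite gt_eqF // (lt_trans ltr01 rk1).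
  have rk0' : r ^+ k - 1 != 0 by rewrite subr_eq0 gt_eqF.
  have q1 : 1 - q != 0 by rewrite subr_eq0 eq_sym lt_eqF //; case/andP: q01.
  by rewrite /q; field; apply/andP; split.
have aK n : a n ^+ k = (r ^+ k - 1) * q ^+ n.
  by rewrite /a exprMn sk /q !exprVn -!exprM mulnC.
have gE n : g n = C * ((r ^+ k - 1) * q ^+ n) + hn n.
  by rewrite /hn -aK; ring.
have Fac (n : nat) : Pilot.Defs.factor f c k x r n = expR (g n).
  rewrite /Pilot.Defs.factor /= -/s mulrAC -/(a n) f_exp; last exact: between0_scale.
  by rewrite /fcomp -expR_sum -expRB.
have [H [cH bH]] : exists H, (fun N => \sum_(1 <= n < N) hn n) @ \oo --> H /\
                   `|H| <= 2 * M * s.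
  apply: abs_series => N.
  apply: (@le_trans _ _ (\sum_(1 <= n < N) 2 * M * s * ((r ^+ k - 1) * q ^+ n))).
    apply: ler_sum_nat => n _; apply: (le_trans (hnb n)).
    rewrite exprS -aK mulrA ler_wpM2r ?exprn_ge0 //.
    by apply: ler_wpM2l; [rewrite mulr_ge0 | exact: as_].
  rewrite -mulr_sumr ler_piMr ?mulr_ge0 // -mulr_sumr -[X in _ <= X]Hone.
  apply: ler_wpM2l; first by rewrite subr_ge0 ltW.
  exact: geom_le.
exists H; split => //.
have c1 : (fun N => C * ((r ^+ k - 1) * \sum_(1 <= n < N) q ^+ n)) @ \oo -->
          C * ((r ^+ k - 1) * (q / (1 - q))).
  apply: cvgM; first exact: cvg_cst.
  apply: cvgM; first exact: cvg_cst.
  exact: geom_cvg.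
rewrite Hone mulr1 in c1.
have c2 := cvgD c1 cH.
have -> : partprod f c k x r =
    expR \o (fun N => C * ((r ^+ k - 1) * \sum_(1 <= n < N) q ^+ n) +
                      \sum_(1 <= n < N) hn n).
  apply: funext => N /=; rewrite /partprod.
  under eq_bigr do rewrite Fac.
  rewrite -expR_sum; congr expR.
  rewrite (eq_bigr (fun n => C * ((r ^+ k - 1) * q ^+ n) + hn n)); last first.
    by move=> n _; exact: gE.
  by rewrite big_split /= -!mulr_sumr.
apply: continuous_cvg; first exact: continuous_expR.
exact: c2.
Qed.
Theorem lemma3 (R : realType) (x : R) (f : R -> R) (c : nat -> R)
  (f_analytic : forall y, between0 x y -> analytic_at f y)
  (f_nonzero : forall y, between0 x y -> f y != 0)
  (f0 : f 0 = 1)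
  (ser_cvg : forall y, between0 x y -> cvgn (logser c y))
  (f_exp : forall y, between0 x y -> f y = expR (limn (logser c y)))
  (k : nat) (k_pos : (0 < k)%N) :
  exists2 d : R, 0 < d &
    (forall r, 1 < r < 1 + d -> cvgn (partprod f c k x r)) /\
    (fun r => limn (partprod f c k x r)) r @[r --> 1^'+] --> fcomp c k x.
Proof.
have bx : between0 x x.
  by rewrite -[X in between0 x X]mul1r; apply: between0_scale; rewrite ler01 lexx.
have [B HB'] : exists B : R, forall n, `|logser c x n| <= B.
  have := cvg_seq_bounded (ser_cvg x bx).
  move=> /(@ex_bound _ _ _ _ _ (@globally_properfilter _ setT 0%N I)) [B HB].
  by exists B => n; exact: HB.
set M := B + B.
have M0 : 0 <= M by have := HB' 0%N; have := normr_ge0 (logser c x 0); rewrite /M; lra.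
have HM i : (0 < i)%N -> `|c i * x ^+ i| <= M.
  move=> i0; have -> : c i * x ^+ i = logser c x i.+1 - logser c x i.
    by rewrite /logser big_nat_recr //= addrAC subrr add0r.
  apply: (le_trans (ler_normB _ _)); exact: lerD.
have [d d0 Hd] := @s_small R k (1/2) k_pos ltac:(lra).
exists d => //; split.
  move=> r /andP[r1 r2].
  have [H [cv _]] := @main_r R x f c k M r k_pos ser_cvg f_exp M0 HM r1 (ltW (Hd r ltac:(lra))).
  exact: cvgP cv.
apply/cvgrPdist_lt => eps eps0.
have := @continuous_expR R (c k * x ^+ k).
move=> /cvgrPdist_lt /(_ eps eps0) /nbhs_ballP [del /= del0 Hdel].
have M1 : 0 < 2 * M + 1 by lra.
have t0 : 0 < del / (2 * M + 1) by rewrite divr_gt0.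
have [e e0 He] := @s_small R k (del / (2 * M + 1)) k_pos t0.
near=> r.
have r1 : 1 < r by near: r; exact: nbhs_right_gt.
have r2 : r < 1 + Num.min d e.
  by near: r; apply: nbhs_right_lt; rewrite ltrDl lt_min d0 e0.
have rd : r < 1 + d by apply: (lt_le_trans r2); rewrite lerD2l ge_min lexx.
have re : r < 1 + e by apply: (lt_le_trans r2); rewrite lerD2l ge_min lexx orbT.
have sh := Hd r ltac:(lra).
have se := He r ltac:(lra).
have [H [cv bH]] := @main_r R x f c k M r k_pos ser_cvg f_exp M0 HM r1 (ltW sh).
rewrite (cvg_lim _ cv) //.
have : ball (c k * x ^+ k) del (c k * x ^+ k + H).
  rewrite -ball_normE /ball_ /= opprD addNKr normrN.
  set t := del / (2 * M + 1) in t0 se.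
  have tE : t * (2 * M + 1) = del by rewrite /t mulfVK // gt_eqF.
  have s0 := powR_ge0 (r ^+ k - 1) (k%:R)^-1.
  move: (powR (r ^+ k - 1) (k%:R)^-1) s0 se bH => s s0 se bH.
  nra.
by move=> /Hdel.
Unshelve. all: by end_near.
Qed.
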